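(* Let $F$ be a field and let $v$ be a place of $F(T)$ which is trivial on $F$ and whose residue field is separable over $F$. Then the maps $\mathcal D_j$ on $F(T)$ extend continuously to the completion of $F(T)$ at $v$, and there they form a higher $K$-derivation for any coefficient field $K$ of the completion such that $K$ contains $F$.
   Context: For $j\ge0$, $\mathcal D_j$ is the $j$th hyperdifferential operator: the $F$-linear map on $F[T]$ with $\mathcal D_j(T^m)=\binom{m}{j}T^{m-j}$ for $m\ge0$. The sequence $(\mathcal D_j)$ is a higher $F$-derivation on $F[T]$ and extends uniquely to a higher $F$-derivation on the field $F(T)$; these extended maps are the $\mathcal D_j$ on $F(T)$. Here, for a commutative ring $R$ and $R$-algebra $A$, a higher $R$-derivation on $A$ is a sequence of $R$-linear maps $d_j:A\to A$ with $d_0=\mathrm{id}$ and $d_j(ab)=\sum_{k=0}^jd_k(a)d_{j-k}(b)$. A coefficient field of a complete discretely valued field is a subfield of its valuation ring mapping isomorphically onto the residue field. *)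

(* Defs.v *)
From mathcomp Require Import all_boot all_order all_algebra all_field.
Set Implicit Arguments. Unset Strict Implicit. Unset Printing Implicit Defensive.
Import Order.TTheory GRing.Theory Num.Theory.
Local Open Scope ring_scope.

Notation ratfun F := {fraction {poly F}}.
Definition polyF (F : fieldType) (p : {poly F}) : ratfun F := @FracField.tofrac _ p.
Definition constF (F : fieldType) (c : F) : ratfun F := polyF c%:P.

(* [vge w x n] : "w(x) >= n", with the convention w(0) = +oo. *)
Definition vge (R : fieldType) (w : R -> int) (x : R) (n : int) : Prop :=
  x = 0 \/ (n <= w x)%R.

(* A (normalized, surjective) discrete valuation  w : R^* ->> Z  (value at 0 is
   irrelevant; w 0 = +oo is encoded by vge). *)
Definition discrete_valuation (R : fieldType) (w : R -> int) : Prop :=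
  [/\ (forall x y, x != 0 -> y != 0 -> w (x * y) = w x + w y),
      (forall x y, x != 0 -> y != 0 -> x + y != 0 ->
                   Order.min (w x) (w y) <= w (x + y))
    & exists pi : R, pi != 0 /\ w pi = 1].

Definition trivial_on_F (F : fieldType) (w : ratfun F -> int) : Prop :=
  forall c : F, c != 0 -> w (constF c) = 0.

(* The residue field O_w / m_w is separable (algebraic) over F: the residue of
   every a in the valuation ring is a root of a separable polynomial over F. *)
Definition separable_residue (F : fieldType) (w : ratfun F -> int) : Prop :=
  forall a : ratfun F, vge w a 0 ->
    exists q : {poly F}, separable_poly q /\
      vge w ((map_poly (@constF F) q).[a]) 1.

Definition higher_derivation (A : comRingType) (S : A -> Prop)
    (d : nat -> A -> A) : Prop :=
  [/\ (forall x, d 0%N x = x),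
      (forall j x y, d j (x + y) = d j x + d j y),
      (forall j s x, S s -> d j (s * x) = s * d j x)
    & (forall j a b, d j (a * b) = \sum_(k < j.+1) d k a * d (j - k)%N b)].

Definition hyperdiff_on_ratfun (F : fieldType)
    (D : nat -> ratfun F -> ratfun F) : Prop :=
  higher_derivation (fun x => exists c : F, x = constF c) D /\
  (forall j (p : {poly F}), D j (polyF p) = polyF (p^`N(j))).

Definition v_cauchy (R : fieldType) (w : R -> int) (u : nat -> R) : Prop :=
  forall n : int, exists N, forall m k, (N <= m)%N -> (N <= k)%N -> vge w (u m - u k) n.
Definition v_converges (R : fieldType) (w : R -> int) (u : nat -> R) (l : R) : Prop :=
  forall n : int, exists N, forall m, (N <= m)%N -> vge w (u m - l) n.
Definition v_continuous (R : fieldType) (w : R -> int) (f : R -> R) : Prop :=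
  forall x (n : int), exists m : int, forall y, vge w (y - x) m -> vge w (f y - f x) n.

Definition is_completion (L E : fieldType) (w : L -> int) (wE : E -> int)
    (iota : L -> E) : Prop :=
  [/\ discrete_valuation wE,
      (forall u, v_cauchy wE u -> exists l, v_converges wE u l),
      (forall x, x != 0 -> wE (iota x) = w x)
    & (forall (e : E) (n : int), exists x : L, vge wE (e - iota x) n)].

Definition is_subfield (E : fieldType) (K : pred E) : Prop :=
  [/\ 0 \in K, 1 \in K,
      (forall x y, x \in K -> y \in K -> x - y \in K),
      (forall x y, x \in K -> y \in K -> x * y \in K)
    & (forall x, x \in K -> x^-1 \in K)].

(* coefficient field: a subfield of the valuation ring mapping isomorphically
   (bijectively) onto the residue field. *)
Definition coefficient_field (E : fieldType) (wE : E -> int) (K : pred E) : Prop :=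
  [/\ is_subfield K,
      (forall k, k \in K -> vge wE k 0),
      (forall k1 k2, k1 \in K -> k2 \in K -> vge wE (k1 - k2) 1 -> k1 = k2)
    & (forall a, vge wE a 0 -> exists2 k, k \in K & vge wE (a - k) 1)].

(* Main.v *)
From HB Require Import structures.
From HB Require Import structures.
Require Import Defs.
From mathcomp Require Import all_boot all_order all_algebra all_field.
From mathcomp Require Import zify.
Set Implicit Arguments. Unset Strict Implicit. Unset Printing Implicit Defensive.
Import Order.TTheory GRing.Theory Num.Theory.
Local Open Scope ring_scope.

Lemma frac_rep (R : idomainType) (x : {fraction R}) :
  exists p q, q != 0 /\ x = (@FracField.tofrac R p) / (@FracField.tofrac R q).
Proof.
elim/quotP: x => r _.
exists (frac r).1, (frac r).2; split; first exact: denom_ratioP.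
apply: (@mulIf _ (FracField.tofrac (frac r).2)); first by rewrite tofrac_eq0 denom_ratioP.
rewrite mulfVK ?tofrac_eq0 ?denom_ratioP //.
unlock FracField.tofrac.
apply: etrans; first exact: (esym (FracField.pi_mul _ _)).
apply/eqmodP => /=. rewrite FracField.equivfE /FracField.mulf /=.
rewrite !numden_Ratio ?oner_neq0 ?mulf_neq0 ?denom_ratioP ?oner_neq0 //.
by rewrite !mulr1 mulrC.
Qed.


Section CF.
Variable F : fieldType.
Fact constF_zmod : zmod_morphism (@constF F).
Proof. by move=> x y; rewrite /constF /polyF polyCB rmorphB. Qed.
Fact constF_monoid : monoid_morphism (@constF F).
Proof. by split; [rewrite /constF /polyF rmorph1 | move=> x y; rewrite /constF /polyF polyCM rmorphM]. Qed.
HB.instance Definition _ := GRing.isZmodMorphism.Build F (ratfun F) (@constF F) constF_zmod.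
HB.instance Definition _ := GRing.isMonoidMorphism.Build F (ratfun F) (@constF F) constF_monoid.
End CF.
Section Val.
Variables (R : fieldType) (w : R -> int).
Hypothesis hw : discrete_valuation w.

Lemma wM x y : x != 0 -> y != 0 -> w (x * y) = w x + w y.
Proof. by case: hw => h _ _; apply: h. Qed.
Lemma wD x y : x != 0 -> y != 0 -> x + y != 0 -> Order.min (w x) (w y) <= w (x + y).
Proof. by case: hw => _ h _; apply: h. Qed.
Lemma w1 : w 1 = 0.
Proof. have h : (1:R) != 0 := oner_neq0 _. have := wM h h; rewrite mulr1; lia. Qed.
Lemma wN1 : w (-1) = 0.
Proof.
have h : (-1 : R) != 0 by rewrite oppr_eq0 oner_neq0.
have := wM h h; rewrite mulrNN mulr1 w1; lia.
Qed.
Lemma wN x : w (- x) = w x.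
Proof.
have [->|x0] := eqVneq x 0; first by rewrite oppr0.
have h : (-1 : R) != 0 by rewrite oppr_eq0 oner_neq0.
by rewrite -mulN1r wM // wN1 add0r.
Qed.
Lemma wV x : x != 0 -> w (x^-1) = - w x.
Proof.
move=> x0; have := wM x0 (invr_neq0 x0); rewrite mulfV // w1; lia.
Qed.
Lemma wX x n : x != 0 -> w (x ^+ n) = (n%:Z * w x).
Proof.
move=> x0; elim: n => [|n IH]; first by rewrite expr0 w1 mul0r.
rewrite exprS wM ?expf_neq0 // IH; lia.
Qed.

Lemma vge0 n : vge w 0 n. Proof. by left. Qed.
Lemma vgeN x n : vge w x n -> vge w (- x) n.
Proof. by case=> [->|h]; [rewrite oppr0; left | right; rewrite wN]. Qed.
Lemma vgeNE x n : vge w (- x) n <-> vge w x n.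
Proof. by split=> [/vgeN|/vgeN//]; rewrite opprK. Qed.
Lemma vgeD x y n : vge w x n -> vge w y n -> vge w (x + y) n.
Proof.
case=> [->|hx]; first by rewrite add0r.
case=> [->|hy]; first by rewrite addr0; right.
have [x0|x0] := eqVneq x 0; first by rewrite x0 add0r; right.
have [y0|y0] := eqVneq y 0; first by rewrite y0 addr0; right.
have [s0|s0] := eqVneq (x + y) 0; first by left.
right; apply: le_trans (wD x0 y0 s0).
by rewrite le_min hx hy.
Qed.
Lemma vgeB x y n : vge w x n -> vge w y n -> vge w (x - y) n.
Proof. by move=> hx hy; apply: vgeD => //; apply: vgeN. Qed.
Lemma vge_le x n m : vge w x n -> m <= n -> vge w x m.
Proof. by case=> [->|h] mn; [left | right; apply: le_trans h]. Qed.
Lemma vgeM x y n m : vge w x n -> vge w y m -> vge w (x * y) (n + m).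
Proof.
case=> [->|hx]; first by rewrite mul0r; left.
case=> [->|hy]; first by rewrite mulr0; left.
have [x0|x0] := eqVneq x 0; first by rewrite x0 mul0r; left.
have [y0|y0] := eqVneq y 0; first by rewrite y0 mulr0; left.
right; rewrite wM //; exact: lerD.
Qed.
Lemma vgeM0 x y : vge w x 0 -> vge w y 0 -> vge w (x * y) 0.
Proof. by move=> hx hy; have := vgeM hx hy; rewrite addr0. Qed.
Lemma vge_sum (I : Type) (r : seq I) (P : pred I) (f : I -> R) n :
  (forall i, P i -> vge w (f i) n) -> vge w (\sum_(i <- r | P i) f i) n.
Proof.
move=> h; elim/big_rec: _ => [|i x Pi hx]; first by left.
exact: vgeD (h i Pi) hx.
Qed.
Lemma vge_all x : (forall n : nat, vge w x n%:Z) -> x = 0.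
Proof.
move=> h; have [//|x0] := eqVneq x 0.
case: (h `|w x|.+1)%N => // hl; exfalso.
move: hl; lia.
Qed.
Lemma vge_bound x : exists M : int, M <= 0 /\ vge w x M.
Proof.
have [->|x0] := eqVneq x 0; first by exists 0; split => //; left.
exists (Order.min 0 (w x)); split; first by rewrite ge_min lexx.
by right; rewrite ge_min lexx orbT.
Qed.
Lemma w_strict x y : x != 0 -> y != 0 -> w x < w y -> w (x + y) = w x /\ x + y != 0.
Proof.
move=> x0 y0 lt.
have s0 : x + y != 0.
  apply/negP => /eqP e; move/eqP: e; rewrite addr_eq0 => /eqP ex.
  by move: lt; rewrite ex wN ltxx.
split => //.
have h1 := wD x0 y0 s0.
have h2 : Order.min (w (x + y)) (w (- y)) <= w (x + y + - y).
  by apply: wD => //; [rewrite oppr_eq0 | rewrite addrK].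
move: h1 h2; rewrite addrK wN !ge_min.
move: lt; lia.
Qed.
End Val.
From Stdlib Require Import ClassicalEpsilon.
From mathcomp Require Import ring.
Section DL.
Variables (F : fieldType) (w : ratfun F -> int) (D : nat -> ratfun F -> ratfun F).
Hypotheses (hw : discrete_valuation w) (htriv : trivial_on_F w) (hD : hyperdiff_on_ratfun D).

Local Notation L := (ratfun F).
Local Notation T := (polyF 'X : L).

Lemma polyFD p q : polyF (p + q) = polyF p + polyF q :> L.
Proof. by rewrite /polyF rmorphD. Qed.
Lemma polyFM p q : polyF (p * q) = polyF p * polyF q :> L.
Proof. by rewrite /polyF rmorphM. Qed.
Lemma polyF0 : polyF 0 = 0 :> L. Proof. by rewrite /polyF rmorph0. Qed.
Lemma polyF_eq0 p : (polyF p == 0 :> L) = (p == 0).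
Proof. by rewrite /polyF tofrac_eq0. Qed.
Lemma constF_eq0 c : (constF c == 0 :> L) = (c == 0).
Proof. by rewrite /constF polyF_eq0 polyC_eq0. Qed.
Lemma vge_const c : vge w (constF c) 0.
Proof.
have [->|c0] := eqVneq c 0; first by rewrite rmorph0; left.
by right; rewrite htriv.
Qed.

Lemma D0 x : D 0 x = x. Proof. by case: hD => [[h _ _ _] _]; apply: h. Qed.
Lemma DD j x y : D j (x + y) = D j x + D j y. Proof. by case: hD => [[_ h _ _] _]; apply: h. Qed.
Lemma DM j a b : D j (a * b) = \sum_(k < j.+1) D k a * D (j - k)%N b.
Proof. by case: hD => [[_ _ _ h] _]; apply: h. Qed.
Lemma Dpoly j p : D j (polyF p) = polyF (p^`N(j)). Proof. by case: hD => _ h; apply: h. Qed.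
Lemma Dzero j : D j 0 = 0.
Proof. have h := DD j 0 0; rewrite addr0 in h; by apply: (@addrI _ (D j 0)); rewrite addr0 -h. Qed.
Lemma DN j x : D j (- x) = - D j x.
Proof. by apply/eqP; rewrite -subr_eq0 opprK -DD addNr Dzero. Qed.
Lemma DB j x y : D j (x - y) = D j x - D j y.
Proof. by rewrite DD DN. Qed.
Lemma Dconst j c : D j (constF c) = if j == 0%N then constF c else 0.
Proof. by rewrite /constF Dpoly nderivnC; case: (j == 0%N) => //; rewrite polyF0. Qed.
Lemma Done j : D j 1 = if j == 0%N then 1 else 0.
Proof. by rewrite -(rmorph1 (@constF F)) Dconst. Qed.

Definition Pd (u : L) := forall j, vge w (D j u) 0.

Lemma Pd_add x y : Pd x -> Pd y -> Pd (x + y).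
Proof. by move=> hx hy j; rewrite DD; apply: (vgeD hw). Qed.
Lemma Pd_mul x y : Pd x -> Pd y -> Pd (x * y).
Proof.
move=> hx hy j; rewrite DM; apply: (vge_sum hw) => //= k _.
by apply: (vgeM0 hw).
Qed.
Lemma Pd_const c : Pd (constF c).
Proof. by move=> j; rewrite Dconst; case: (j == 0%N); [apply: vge_const | left]. Qed.
Lemma Pd0 : Pd 0.
Proof. by move=> j; rewrite Dzero; left. Qed.
Lemma Pd1 : Pd 1.
Proof. by rewrite -(rmorph1 (@constF F)); apply: Pd_const. Qed.
Lemma Pd_exp x n : Pd x -> Pd (x ^+ n).
Proof. by move=> hx; elim: n => [|n IH]; [rewrite expr0; apply: Pd1 | rewrite exprS; apply: Pd_mul]. Qed.
Lemma Pd_vge x : Pd x -> vge w x 0.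
Proof. by move=> h; have := h 0%N; rewrite D0. Qed.

Lemma Pd_inv x : x != 0 -> vge w x^-1 0 ->
  (forall k, (0 < k)%N -> vge w (x^-1 * D k x) 0) -> Pd (x^-1).
Proof.
move=> x0 hy hk j; elim/ltn_ind: j => j IH.
case: j IH => [|j] IH; first by rewrite D0.
have e := DM j.+1 x x^-1.
rewrite mulfV // Done /= big_ord_recl /= D0 subn0 in e.
have -> : D j.+1 x^-1 = - (x^-1 * \sum_(i < j.+1) D (bump 0 i) x * D (j.+1 - bump 0 i)%N x^-1).
  apply: (@mulfI _ x) => //.
  rewrite mulrN mulrA mulfV // mul1r; apply/eqP; rewrite -addr_eq0; apply/eqP.
  exact: esym e.
apply: (vgeN hw); rewrite mulr_sumr; apply: (vge_sum hw) => i _.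
rewrite mulrA; apply: (vgeM0 hw); first exact: hk.
apply: IH; rewrite /bump /=; lia.
Qed.

Lemma Pd_div a b : Pd a -> Pd b -> b != 0 -> w b = 0 -> Pd (a / b).
Proof.
move=> ha hb b0 wb; apply: Pd_mul => //; apply: Pd_inv => //.
  by right; rewrite wV // wb.
move=> k _; apply: (vgeM0 hw); last exact: hb.
by right; rewrite wV // wb.
Qed.

Lemma polyF_ind (P : {poly F} -> Prop) :
  P 0 -> (forall p c, P p -> P (p * 'X + c%:P)) -> forall p, P p.
Proof. by move=> h0 hs; elim/poly_ind. Qed.

End DL.

Section DL2.
Variables (F : fieldType) (w : ratfun F -> int) (D : nat -> ratfun F -> ratfun F).
Hypotheses (hw : discrete_valuation w) (htriv : trivial_on_F w) (hD : hyperdiff_on_ratfun D).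

Local Notation L := (ratfun F).
Local Notation T := (polyF 'X : L).
Local Notation Pd := (Pd w D).

Lemma T0 : T != 0.
Proof. by rewrite polyF_eq0 polyX_eq0. Qed.

Lemma DT k : (0 < k)%N -> D k T = constF (('C(1, k))%:R).
Proof.
move=> k0; rewrite (Dpoly hD) -['X]expr1 nderivnXn (_ : (1 - k)%N = 0%N); last by lia.
by rewrite expr0 /constF polyC_natr.
Qed.

Lemma vge_polyF (hT : vge w T 0) p : vge w (polyF p) 0.
Proof.
elim/poly_ind: p => [|p c IH]; first by rewrite polyF0; left.
rewrite polyFD polyFM; apply: (vgeD hw); [exact: (vgeM0 hw) | exact: vge_const].
Qed.

Lemma A1 (hT : vge w T 0) u : vge w u 0 -> Pd u.
Proof.
move=> hu.
have [p [q [q0 eu]]] := frac_rep u.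
have [a [b [g [g0 ep eq cop]]]] : exists a b g : {poly F},
    [/\ g != 0, p = a * g, q = b * g & coprimep a b].
  exists (p %/ gcdp p q), (q %/ gcdp p q), (gcdp p q).
  rewrite !divpK ?dvdp_gcdl ?dvdp_gcdr //; split => //.
    by rewrite gcdp_eq0 negb_and q0 orbT.
  by apply: coprimep_div_gcd; rewrite q0 orbT.
have b0 : b != 0 by apply: contraNneq q0 => hb; rewrite eq hb mul0r.
have eu' : u = polyF a / polyF b.
  rewrite eu ep eq /polyF !rmorphM invfM mulrACA divff ?mulr1 //.
  by have := g0; rewrite -(@tofrac_eq0 _ g).
have Pa : Pd (polyF a) by move=> j; rewrite (Dpoly hD); apply: vge_polyF.
have Pb : Pd (polyF b) by move=> j; rewrite (Dpoly hD); apply: vge_polyF.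
have pb0 : polyF b != 0 :> L by rewrite polyF_eq0.
case/Bezout_coprimepP: cop => [[r1 r2]] /= hr.
have : size (r1 * a + r2 * b) == 1%N by rewrite (eqp_size hr) size_poly1.
case/size_poly1P => c c0 ec.
have nboth : ~ (vge w (polyF a) 1 /\ vge w (polyF b) 1).
  case=> ha hb.
  have : vge w (polyF (r1 * a + r2 * b)) (0 + 1).
    rewrite polyFD !polyFM; apply: (vgeD hw); apply: (vgeM hw) => //; exact: vge_polyF.
  rewrite ec -/(constF c) add0r; case=> [/eqP|]; first by rewrite constF_eq0 (negPf c0).
  by rewrite htriv.
have wb : w (polyF b) = 0.
  have := vge_polyF hT b; case=> [/eqP|hb0]; first by rewrite (negPf pb0).
  case: (leP (w (polyF b)) 0) => hb1; first by apply/eqP; rewrite eq_le hb0 hb1.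
  exfalso; apply: nboth; split; last by right.
  have [pa|pa0] := eqVneq (polyF a) 0; first by left.
  have := vge_polyF hT a; case=> [/eqP|ha0]; first by rewrite (negPf pa0).
  case: (leP 1 (w (polyF a))) => ha1; first by right.
  have u0 : u != 0.
    by rewrite eu'; apply: (@mulf_neq0 L); [exact: pa0 | rewrite invr_eq0 polyF_eq0 b0].
  case: hu => [/eqP|hu]; first by rewrite (negPf u0).
  have ib0 : (polyF b)^-1 != 0 :> L by rewrite invr_eq0 polyF_eq0 b0.
  move: hu; rewrite eu' (wM hw pa0 ib0) (wV hw pb0).
  move: ha0 ha1 hb1; lia.
by rewrite eu'; apply: (Pd_div hw hD Pa Pb pb0 wb).
Qed.


Section Neg.
Hypothesis hT : w T < 0.
Local Notation S := (T^-1).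

Lemma PdS : Pd S.
Proof.
apply: (Pd_inv hw hD T0); first by right; rewrite (wV hw T0); move: hT; lia.
move=> k k0; rewrite DT //; apply: (vgeM0 hw); last exact: vge_const.
by right; rewrite (wV hw T0); move: hT; lia.
Qed.

Lemma claimS (p : {poly F}) d : (size p <= d.+1)%N -> Pd (polyF p * S ^+ d).
Proof.
elim/poly_ind: p d => [|p c IH] d hs.
  by rewrite polyF0 mul0r; apply: Pd0.
have [p0|p0] := eqVneq p 0.
  rewrite p0 mul0r add0r; apply: (Pd_mul hw hD); first exact: (Pd_const htriv hD).
  exact: (Pd_exp hw htriv hD _ PdS).
move: hs; rewrite size_MXaddC (negPf p0) => hs.
case: d hs => [|d] hs.
  by move: hs; rewrite ltnS leqn0 size_poly_eq0 (negPf p0).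
rewrite polyFD polyFM mulrDl; apply: (Pd_add hw hD).
  rewrite exprS mulrA -(mulrA (polyF p)) (mulfV T0) mulr1.
  by apply: IH.
apply: (Pd_mul hw hD); first exact: (Pd_const htriv hD).
exact: (Pd_exp hw htriv hD _ PdS).
Qed.

Lemma wpoly (p : {poly F}) : p != 0 -> w (polyF p) = ((size p).-1)%:Z * w T.
Proof.
elim/poly_ind: p => [|p c IH]; first by rewrite eqxx.
move=> pc0; have [p0|p0] := eqVneq p 0.
  move: pc0; rewrite p0 mul0r add0r => c0.
  have c0' : c != 0 by rewrite -polyC_eq0.
  by rewrite size_polyC c0' /= mul0r; apply: htriv.
rewrite size_MXaddC (negPf p0) /=.
have pp0 : polyF p != 0 :> L by rewrite polyF_eq0.
have pF0 : polyF p * T != 0 by apply: (@mulf_neq0 L); [exact: pp0 | exact: T0].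
have sp : (0 < size p)%N by rewrite size_poly_gt0.
have e1 : w (polyF p * T) = (size p)%:Z * w T.
  by rewrite (wM hw pp0 T0) IH // -[in RHS](prednK sp) intS mulrDl mul1r addrC.
have [c0|c0] := eqVneq c 0.
  by rewrite c0 polyC0 addr0 polyFM.
rewrite polyFD polyFM.
have c0' : constF c != 0 by rewrite constF_eq0.
have hlt : w (polyF p * T) < w (constF c) by rewrite e1 htriv //; move: hT sp; nia.
by have [-> _] := w_strict hw pF0 c0' hlt.
Qed.

Lemma A2 u : vge w u 0 -> Pd u.
Proof.
move=> hu; have [->|u0] := eqVneq u 0; first exact: Pd0.
have [p [q [q0 eu]]] := frac_rep u.
have p0 : p != 0.
  by apply: contraNneq u0 => hp; rewrite eu hp rmorph0 mul0r.
have pp0 : polyF p != 0 :> L by rewrite polyF_eq0.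
have pq0 : polyF q != 0 :> L by rewrite polyF_eq0.
have ipq0 : (polyF q)^-1 != 0 :> L by rewrite invr_eq0.
have wu : w u = (((size p).-1)%:Z - ((size q).-1)%:Z) * w T.
  rewrite eu -/(polyF p) -/(polyF q) (wM hw pp0 ipq0) (wV hw pq0) (wpoly p0) (wpoly q0).
  by rewrite mulrBl.
have sp : (0 < size p)%N by rewrite size_poly_gt0.
have sq : (0 < size q)%N by rewrite size_poly_gt0.
have hs : (size p <= size q)%N.
  case: hu => [/eqP|hu]; first by rewrite (negPf u0).
  move: hu; rewrite wu.
  have ep := prednK sp; have eq := prednK sq.
  move: ((size p).-1) ((size q).-1) ep eq => m n <- <-.
  move: hT; nia.
set d := (size q).-1.
have iT0 : T^-1 != 0 :> L by rewrite invr_eq0 T0.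
have Sd0 : S ^+ d != 0 :> L by rewrite expf_neq0.
have -> : u = (polyF p * S ^+ d) / (polyF q * S ^+ d).
  by rewrite eu invfM mulrACA (divff Sd0) mulr1.
have bq0 : polyF q * S ^+ d != 0 :> L by apply: (@mulf_neq0 L); [exact: pq0 | exact: Sd0].
apply: (Pd_div hw hD _ _ bq0).
- by apply: claimS; rewrite /d prednK.
- by apply: claimS; rewrite /d prednK.
rewrite (wM hw pq0 Sd0) (wX hw _ iT0) (wV hw T0) (wpoly q0).
rewrite -/d; lia.
Qed.

End Neg.

Lemma A u : vge w u 0 -> Pd u.
Proof.
case: (leP 0 (w T)) => hT; first by apply: A1; right.
exact: A2.
Qed.

End DL2.

Section DL3.
Variables (F : fieldType) (w : ratfun F -> int) (D : nat -> ratfun F -> ratfun F).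
Hypotheses (hw : discrete_valuation w) (htriv : trivial_on_F w) (hD : hyperdiff_on_ratfun D).
Variable pi : ratfun F.
Hypotheses (pi0 : pi != 0) (hpi : w pi = 1).

Lemma Dpow n k : vge w (D k (pi ^+ n)) (n%:Z - k%:Z).
Proof.
elim: n k => [|n IH] k.
  rewrite expr0 (Done hD); case: eqP => _; last by left.
  by right; rewrite (w1 hw); lia.
rewrite exprS (DM hD); apply: (vge_sum hw) => i _.
have [i0|i0] := posnP i.
  have hp1 : vge w pi 1 by right; rewrite hpi.
  rewrite i0 (D0 hD) subn0; apply: vge_le; first exact: (vgeM hw hp1 (IH k)).
  lia.
have hp0 : vge w pi 0 by right; rewrite hpi.
apply: vge_le; first exact: (vgeM hw (A hw htriv hD hp0 i) (IH (k - i)%N)).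
have := ltn_ord i; lia.
Qed.

Lemma Blip x (n : nat) j : vge w x n%:Z -> vge w (D j x) (n%:Z - j%:Z).
Proof.
have [->|x0] := eqVneq x 0; first by rewrite (Dzero hD); left.
case=> [/eqP|hx]; first by rewrite (negPf x0).
have pn0 : pi ^+ n != 0 := expf_neq0 n pi0.
have ex : x = pi ^+ n * (x / pi ^+ n) by rewrite mulrC (divfK pn0).
have u0 : x / pi ^+ n != 0 := mulf_neq0 x0 (invr_neq0 pn0).
move: (x / pi ^+ n) ex u0 => u ex u0.
have hu : vge w u 0.
  right; move: hx; rewrite ex (wM hw pn0 u0) (wX hw _ pi0) hpi; lia.
rewrite ex (DM hD); apply: (vge_sum hw) => i _.
apply: vge_le; first exact: (vgeM hw (Dpow n i) (A hw htriv hD hu (j - i)%N)).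
have := ltn_ord i; lia.
Qed.

End DL3.

Lemma sub3 (R : zmodType) (a b e : R) : a - b = (e - b) - (e - a).
Proof. by rewrite [RHS]addrC opprB addrA subrK. Qed.

Section Ext.
Variables (F : fieldType) (w : ratfun F -> int) (D : nat -> ratfun F -> ratfun F).
Hypotheses (hw : discrete_valuation w) (htriv : trivial_on_F w) (hD : hyperdiff_on_ratfun D).
Variable pi : ratfun F.
Hypotheses (pi0 : pi != 0) (hpi : w pi = 1).
Variables (E : fieldType) (wE : E -> int) (iota : {rmorphism ratfun F -> E}).
Hypothesis hE : is_completion w wE iota.

Local Notation L := (ratfun F).

Lemma hwE : discrete_valuation wE. Proof. by case: hE. Qed.
Lemma hcomp u : v_cauchy wE u -> exists l, v_converges wE u l.
Proof. by case: hE => _ h _ _; apply: h. Qed.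
Lemma hiso x : x != 0 -> wE (iota x) = w x.
Proof. by case: hE => _ _ h _; apply: h. Qed.
Lemma hdense (e : E) (n : int) : exists x : L, vge wE (e - iota x) n.
Proof. by case: hE => _ _ _ h; apply: h. Qed.

Lemma viso x n : vge wE (iota x) n <-> vge w x n.
Proof.
have [->|x0] := eqVneq x 0; first by rewrite rmorph0; split; left.
have ix0 : iota x != 0 by rewrite fmorph_eq0.
split; case=> [/eqP|h].
- by rewrite (negPf ix0).
- by right; rewrite -hiso.
- by rewrite (negPf x0).
- by right; rewrite hiso.
Qed.

Definition approx (e : E) (n : nat) : L :=
  proj1_sig (constructive_indefinite_description _ (hdense e n%:Z)).
Lemma approxP e n : vge wE (e - iota (approx e n)) n%:Z.
Proof. exact: (proj2_sig (constructive_indefinite_description _ (hdense e n%:Z))). Qed.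

Definition seqD j e (k : nat) : E := iota (D j (approx e k)).

Lemma approx_close e (m k n : nat) : (n <= m)%N -> (n <= k)%N ->
  vge w (approx e m - approx e k) n%:Z.
Proof.
move=> nm nk; apply/viso; rewrite rmorphB.
have -> : iota (approx e m) - iota (approx e k) =
          (e - iota (approx e k)) - (e - iota (approx e m)).
  by rewrite (sub3 _ _ e).
apply: (vgeB hwE); apply: vge_le; (apply: approxP || lia).
Qed.

Lemma seqD_cauchy j e : v_cauchy wE (seqD j e).
Proof.
move=> n; exists (`|n| + j)%N => m k hm hk.
rewrite /seqD -rmorphB -(DB hD); apply/viso.
apply: vge_le; first exact: (Blip hw htriv hD pi0 hpi j (approx_close e hm hk)).
lia.
Qed.

Definition Dh j e : E :=
  proj1_sig (constructive_indefinite_description _ (hcomp (seqD_cauchy j e))).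
Lemma DhP j e : v_converges wE (seqD j e) (Dh j e).
Proof. exact: (proj2_sig (constructive_indefinite_description _ (hcomp (seqD_cauchy j e)))). Qed.

Lemma key j e x (n : nat) : vge wE (e - iota x) n%:Z ->
  vge wE (Dh j e - iota (D j x)) (n%:Z - j%:Z).
Proof.
move=> hx.
have [N hN] := DhP j e (n%:Z - j%:Z).
set m := maxn N n.
have h1 := hN m (leq_maxl N n).
have h2 : vge w (approx e m - x) n%:Z.
  apply/viso; rewrite rmorphB.
  have -> : iota (approx e m) - iota x = (e - iota x) - (e - iota (approx e m)).
    by rewrite (sub3 _ _ e).
  apply: (vgeB hwE) => //; apply: vge_le; first exact: approxP.
  have := leq_maxr N n; rewrite -/m; lia.
have h3 := Blip hw htriv hD pi0 hpi j h2.
move/viso: h3; rewrite (DB hD) rmorphB -/(seqD j e m) => h3.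
have -> : Dh j e - iota (D j x) = (seqD j e m - iota (D j x)) - (seqD j e m - Dh j e).
  by rewrite (sub3 _ _ (seqD j e m)).
exact: (vgeB hwE).
Qed.

End Ext.

Lemma sub3' (R : zmodType) (a b c : R) : a - b = (a - c) - (b - c).
Proof. by rewrite opprB addrA subrK. Qed.

Section Ext2.
Variables (F : fieldType) (w : ratfun F -> int) (D : nat -> ratfun F -> ratfun F).
Hypotheses (hw : discrete_valuation w) (htriv : trivial_on_F w) (hD : hyperdiff_on_ratfun D).
Variable pi : ratfun F.
Hypotheses (pi0 : pi != 0) (hpi : w pi = 1).
Variables (E : fieldType) (wE : E -> int) (iota : {rmorphism ratfun F -> E}).
Hypothesis hE : is_completion w wE iota.

Local Notation L := (ratfun F).
Local Notation Dh := (Dh hw htriv hD pi0 hpi hE).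
Local Notation key := (key hw htriv hD pi0 hpi hE).
Local Notation hwE := (hwE hE).

Lemma Dh_ext j x : Dh j (iota x) = iota (D j x).
Proof.
apply/eqP; rewrite -subr_eq0; apply/eqP; apply: vge_all => n.
have h : vge wE (iota x - iota x) (n + j)%N by rewrite subrr; left.
apply: vge_le; first exact: (key j h).
lia.
Qed.

Lemma Dh_cont j : v_continuous wE (Dh j).
Proof.
move=> e n; exists (`|n| + j)%N => y hy.
have [x hx] := hdense hE e (`|n| + j)%N.
have hy' : vge wE (y - iota x) (`|n| + j)%N.
  have -> : y - iota x = (y - e) + (e - iota x) by ring.
  exact: (vgeD hwE).
rewrite (sub3' _ _ (iota (D j x))).
apply: vge_le; first exact: (vgeB hwE (key j hy') (key j hx)).
lia.
Qed.

Lemma Dh0 e : Dh 0 e = e.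
Proof.
apply/eqP; rewrite -subr_eq0; apply/eqP; apply: vge_all => n.
have [x hx] := hdense hE e n.
have h := key 0 hx; rewrite (D0 hD) subr0 in h.
rewrite (sub3' _ _ (iota x)); exact: (vgeB hwE).
Qed.

Lemma DhD j a b : Dh j (a + b) = Dh j a + Dh j b.
Proof.
apply/eqP; rewrite -subr_eq0; apply/eqP; apply: vge_all => n.
have [xa ha] := hdense hE a (n + j)%N.
have [xb hb] := hdense hE b (n + j)%N.
have hab : vge wE (a + b - iota (xa + xb)) (n + j)%N.
  rewrite rmorphD opprD addrACA; exact: (vgeD hwE).
have e1 := key j hab; have e2 := key j ha; have e3 := key j hb.
have -> : Dh j (a + b) - (Dh j a + Dh j b) =
   (Dh j (a + b) - iota (D j (xa + xb))) - (Dh j a - iota (D j xa)) - (Dh j b - iota (D j xb)).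
  rewrite (DD hD) rmorphD; ring.
apply: vge_le; first by apply: (vgeB hwE); [apply: (vgeB hwE) |]; eassumption.
lia.
Qed.

Lemma fam_bound (f : nat -> E) j : exists M : int, M <= 0 /\ forall k, (k <= j)%N -> vge wE (f k) M.
Proof.
elim: j => [|j [M [M0 hM]]].
  have [M [M0 hM]] := vge_bound wE (f 0%N).
  by exists M; split => // k; rewrite leqn0 => /eqP ->.
have [M' [M0' hM']] := vge_bound wE (f j.+1).
exists (Order.min M M'); split; first by rewrite ge_min M0.
move=> k; rewrite leq_eqVlt => /orP [/eqP ->|hk].
  by apply: vge_le hM' _; rewrite ge_min lexx orbT.
by apply: vge_le (hM k hk) _; rewrite ge_min lexx.
Qed.

Lemma DhM j a b : Dh j (a * b) = \sum_(k < j.+1) Dh k a * Dh (j - k)%N b.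
Proof.
have [Ma [Ma0 hMa]] := fam_bound (fun k => Dh k a) j.
have [Mb [Mb0 hMb]] := fam_bound (fun k => Dh k b) j.
set M := Order.min Ma Mb.
have M0 : M <= 0 by rewrite ge_min Ma0.
have hA k : (k <= j)%N -> vge wE (Dh k a) M.
  by move=> hk; apply: vge_le (hMa k hk) _; rewrite ge_min lexx.
have hB k : (k <= j)%N -> vge wE (Dh k b) M.
  by move=> hk; apply: vge_le (hMb k hk) _; rewrite ge_min lexx orbT.
have va : vge wE a M by rewrite -(Dh0 a); apply: hA.
have vb : vge wE b M by rewrite -(Dh0 b); apply: hB.
set A := `|M|%N.
have eMA : M = - (A%:Z) by rewrite /A; lia.
apply/eqP; rewrite -subr_eq0; apply/eqP; apply: vge_all => n.
set N := (n + j + 2 * A)%N.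
have [xa ha] := hdense hE a N.
have [xb hb] := hdense hE b N.
have via : vge wE (iota xa) M.
  have -> : iota xa = a - (a - iota xa) by ring.
  apply: (vgeB hwE) va _; apply: vge_le ha _; rewrite /N; lia.
have hab : vge wE (a * b - iota (xa * xb)) (n + j + A)%N.
  have -> : a * b - iota (xa * xb) = (a - iota xa) * b + iota xa * (b - iota xb).
    by rewrite rmorphM; ring.
  apply: (vgeD hwE).
    by apply: vge_le (vgeM hwE ha vb) _; rewrite /N; lia.
  by apply: vge_le (vgeM hwE via hb) _; rewrite /N; lia.
have e1 := key j hab.
rewrite (DM hD) rmorph_sum in e1.
rewrite (sub3' _ _ (\sum_(k < j.+1) iota (D k xa * D (j - k)%N xb))).
apply: (vgeB hwE); first by apply: vge_le e1 _; lia.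
rewrite -sumrB; apply: (vge_sum hwE) => k _.
have hk : (k <= j)%N by rewrite -ltnS ltn_ord.
have ka := key k ha; have kb := key (j - k)%N hb.
have hu := hA k hk; have hv := hB (j - k)%N (leq_subr _ _).
rewrite rmorphM.
have -> : Dh k a * Dh (j - k)%N b - iota (D k xa) * iota (D (j - k)%N xb) =
   (Dh k a - iota (D k xa)) * Dh (j - k)%N b +
   iota (D k xa) * (Dh (j - k)%N b - iota (D (j - k)%N xb)) by ring.
have hu' : vge wE (iota (D k xa)) M.
  have -> : iota (D k xa) = Dh k a - (Dh k a - iota (D k xa)) by ring.
  apply: (vgeB hwE) hu _; apply: vge_le ka _; rewrite /N; lia.
apply: (vgeD hwE).
  by apply: vge_le (vgeM hwE ka hv) _; rewrite /N; lia.
by apply: vge_le (vgeM hwE hu' kb) _; rewrite /N; lia.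
Qed.

End Ext2.

Lemma hd_vanish (F : fieldType) (E : fieldType) (d : nat -> E -> E) (f : {rmorphism F -> E})
    (q : {poly F}) (s : E) :
  (forall x, d 0%N x = x) -> (forall j x y, d j (x + y) = d j x + d j y) ->
  (forall j a b, d j (a * b) = \sum_(k < j.+1) d k a * d (j - k)%N b) ->
  (forall i c, (0 < i)%N -> d i (f c) = 0) ->
  (map_poly f q).[s] = 0 -> ((map_poly f q)^`()).[s] != 0 ->
  forall j, (0 < j)%N -> d j s = 0.
Proof.
move=> d0 dD dM dc hq hq' j.
have dz i : d i 0 = 0.
  have h := dD i 0 0; rewrite addr0 in h.
  by apply: (@addrI _ (d i 0)); rewrite addr0 -h.
elim/ltn_ind: j => j IH j0.
have H i : (0 < i)%N -> (i <= j)%N -> forall p : {poly F},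
    d i ((map_poly f p).[s]) = ((map_poly f p)^`()).[s] * d i s.
  move=> i0 ij; elim/poly_ind => [|p c IHp].
    by rewrite rmorph0 horner0 deriv0 horner0 mul0r dz.
  rewrite rmorphD rmorphM /= map_polyX map_polyC /= hornerMXaddC derivMXaddC.
  rewrite hornerD hornerM hornerX dD dc // addr0 dM.
  case: i i0 ij IHp => [//|i] _ ij IHp.
  rewrite big_ord_recl big_ord_recr /= d0 subn0 subnn d0 IHp.
  rewrite big1 ?add0r; last first.
    move=> l _; rewrite IH ?mulr0 //.
    - by have := ltn_ord l; rewrite /bump /=; lia.
    - by have := ltn_ord l; rewrite /bump /=; lia.
  rewrite /bump /=; ring.
have := H j j0 (leqnn j) q.
rewrite hq dz => /esym /eqP; rewrite mulf_eq0 (negPf hq') /= => /eqP.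
done.
Qed.

Section Ext3.
Variables (F : fieldType) (w : ratfun F -> int) (D : nat -> ratfun F -> ratfun F).
Hypotheses (hw : discrete_valuation w) (htriv : trivial_on_F w) (hsep : separable_residue w)
  (hD : hyperdiff_on_ratfun D).
Variable pi : ratfun F.
Hypotheses (pi0 : pi != 0) (hpi : w pi = 1).
Variables (E : fieldType) (wE : E -> int) (iota : {rmorphism ratfun F -> E}).
Hypothesis hE : is_completion w wE iota.
Variable K : pred E.
Hypotheses (hK : coefficient_field wE K) (hKF : forall c : F, iota (constF c) \in K).

Local Notation L := (ratfun F).
Local Notation Dh := (Dh hw htriv hD pi0 hpi hE).
Local Notation hwE := (hwE hE).
Local Notation f := (iota \o (@constF F)).

Lemma Ksub : [/\ 0 \in K, 1 \in K,
      (forall x y, x \in K -> y \in K -> x - y \in K),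
      (forall x y, x \in K -> y \in K -> x * y \in K)
    & (forall x, x \in K -> x^-1 \in K)].
Proof. by case: hK. Qed.

Lemma Kadd x y : x \in K -> y \in K -> x + y \in K.
Proof.
case: Ksub => k0 _ kB _ _ hx hy.
have -> : x + y = x - (0 - y) by rewrite sub0r opprK.
exact: kB _ _ hx (kB _ _ k0 hy).
Qed.
Lemma Kmul x y : x \in K -> y \in K -> x * y \in K.
Proof. by case: Ksub => _ _ _ kM _; apply: kM. Qed.

Lemma f_vge c : vge wE (f c) 0.
Proof. by apply/(viso hE); apply: vge_const. Qed.

Lemma horner_close (q : {poly F}) y z : vge wE y 0 -> vge wE z 0 -> vge wE (y - z) 1 ->
  [/\ vge wE (map_poly f q).[y] 0, vge wE (map_poly f q).[z] 0 &
      vge wE ((map_poly f q).[y] - (map_poly f q).[z]) 1].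
Proof.
move=> hy hz hyz; elim/poly_ind: q => [|p c [h1 h2 h3]].
  by rewrite rmorph0 !horner0 subrr; split; left.
rewrite rmorphD rmorphM /= map_polyX map_polyC /= !hornerMXaddC.
split.
- by apply: (vgeD hwE); [apply: (vgeM0 hwE) | apply: f_vge].
- by apply: (vgeD hwE); [apply: (vgeM0 hwE) | apply: f_vge].
have -> : (map_poly f p).[y] * y + f c - ((map_poly f p).[z] * z + f c) =
  ((map_poly f p).[y] - (map_poly f p).[z]) * y + (map_poly f p).[z] * (y - z) by ring.
apply: (vgeD hwE).
  by have := vgeM hwE h3 hy; rewrite addr0.
by have := vgeM hwE h2 hyz; rewrite add0r.
Qed.

Lemma horner_inK (q : {poly F}) s : s \in K -> (map_poly f q).[s] \in K.
Proof.
case: Ksub => k0 _ _ _ _ hs.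
elim/poly_ind: q => [|p c IH]; first by rewrite rmorph0 horner0.
rewrite rmorphD rmorphM /= map_polyX map_polyC /= hornerMXaddC.
by apply: Kadd; [apply: Kmul | apply: hKF].
Qed.

Lemma K_vanish s : s \in K -> forall j, (0 < j)%N -> Dh j s = 0.
Proof.
move=> hs.
have [k0 _ _ _ _] := Ksub.
have [_ hO hinj _] := hK.
have vs := hO s hs.
have [x hx] := hdense hE s 1.
have vx : vge w x 0.
  apply/(viso hE).
  have -> : iota x = s - (s - iota x) by ring.
  by apply: (vgeB hwE) vs _; apply: vge_le hx _.
have [q [sepq hq]] := hsep vx.
have e1 : iota ((map_poly (@constF F) q).[x]) = (map_poly f q).[iota x].
  by rewrite (map_poly_comp iota (@constF F) q) horner_map.
move/(viso hE): hq; rewrite e1 => hq.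
have vix : vge wE (iota x) 0 by apply/(viso hE).
have [_ _ h3] := horner_close q vs vix hx.
have hq1 : vge wE (map_poly f q).[s] 1.
  have -> : (map_poly f q).[s] = ((map_poly f q).[s] - (map_poly f q).[iota x]) + (map_poly f q).[iota x] by ring.
  exact: (vgeD hwE).
have hq0 : (map_poly f q).[s] = 0.
  apply: hinj; [exact: horner_inK | exact: k0 | by rewrite subr0].
have hq' : ((map_poly f q)^`()).[s] != 0.
  apply: (@coprimep_root _ (map_poly f q)); last by rewrite /root hq0.
  rewrite deriv_map coprimep_map.
  by move: sepq; rewrite unlock.
apply: (hd_vanish (d := Dh) (Dh0 _ _ _ _ _ hE) (DhD _ _ _ _ _ hE) (DhM _ _ _ _ _ hE) _ hq0 hq').
move=> i c i0; rewrite /= (Dh_ext _ _ _ _ _ hE) (Dconst hD).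
by case: eqP i0 => [->|]; rewrite ?rmorph0.
Qed.

Lemma Dh_lin j s x : s \in K -> Dh j (s * x) = s * Dh j x.
Proof.
move=> hs; rewrite (DhM _ _ _ _ _ hE) big_ord_recl /= (Dh0 _ _ _ _ _ hE) subn0.
rewrite big1 ?addr0 // => i _.
by rewrite K_vanish ?mul0r.
Qed.

End Ext3.

Theorem theorem4p3 (F : fieldType) (w : ratfun F -> int)
    (D : nat -> ratfun F -> ratfun F)
    (E : fieldType) (wE : E -> int) (iota : {rmorphism ratfun F -> E}) :
  discrete_valuation w -> trivial_on_F w -> separable_residue w ->
  hyperdiff_on_ratfun D ->
  is_completion w wE iota ->
  exists Dh : nat -> E -> E,
    [/\ (forall j, v_continuous wE (Dh j)),
        (forall j x, Dh j (iota x) = iota (D j x))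
      & (forall K : pred E, coefficient_field wE K ->
           (forall c : F, iota (constF c) \in K) ->
           higher_derivation (fun k => k \in K) Dh)].
Proof.
move=> hw htriv hsep hD hE.
have [pi [pi0 hpi]] : exists pi, pi != 0 /\ w pi = 1 by case: hw.
exists (Dh hw htriv hD pi0 hpi hE); split.
- by move=> j; apply: Dh_cont.
- by move=> j x; apply: Dh_ext.
move=> K hK hKF; split.
- exact: Dh0.
- exact: DhD.
- by move=> j s x hs; apply: (Dh_lin hw htriv hsep hD pi0 hpi hE hK hKF).
- exact: DhM.
Qed.
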